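(* Let $\sigma\in\widehat W$ be such that $\mathrm{ran}(\mathrm{id}-\sigma)$ is an affine hyperplane of $V$, and let \[\xi\in V_\sigma\setminus\bigcup_{I\subsetneq\{0,\dots,l\},\ |I|\ge2}V_{\sigma,I}.\] Then there are two distinct indices $i,i'\in\{0,\dots,l\}$ with $\xi\in V_{\sigma,i}\cap V_{\sigma,i'}$. Furthermore $w=\sigma s_i$ and $w'=\sigma s_{i'}$ both lie in $\widehat W_{\mathrm{reg}}$, one has $V_{w,i}=V_{\sigma,i}$ and $V_{w',i'}=V_{\sigma,i'}$, and the open polytopes $V_w$ and $V_{w'}$ lie on opposite sides of the affine hyperplane $\mathrm{ran}(\mathrm{id}-\sigma)$.
   Context: $V$ is a finite-dimensional real Euclidean space, $W$ an irreducible Weyl group acting on $V$ with simple roots $\alpha_1,\dots,\alpha_l$, highest root $\alpha_{\max}$, $\alpha_0:=-\alpha_{\max}$, $\alpha^\vee=2\alpha/\langle\alpha,\alpha\rangle$. Alcove $A=\{x\mid\langle\alpha_i,x\rangle+\delta_{i,0}>0,\ i=0,\dots,l\}$; for a proper subset $I\subsetneq\{0,\dots,l\}$ the face $A_I$ is given by equalities $\langle\alpha_i,x\rangle+\delta_{i,0}=0$ for $i\in I$ and strict inequalities for $i\notin I$; $A_i=A_{\{i\}}$. $\widehat W$ is generated by $s_i(x)=x-(\langle\alpha_i,x\rangle+\delta_{i,0})\alpha_i^\vee$, $i=0,\dots,l$. For $w\in\widehat W$, $\tilde w(x)=w(x)-w(0)$, $V_w=(\mathrm{id}-w)(A)$,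 $V_{w,I}=(\mathrm{id}-w)(A_I)$, $V_{w,i}=V_{w,\{i\}}$, where $(\mathrm{id}-w)(x)=x-w(x)$. $\widehat W_{\mathrm{reg}}=\{w\mid\mathrm{id}-\tilde w\text{ invertible}\}$. *)

(* Defs.v *)
From HB Require Import structures.
From mathcomp Require Import all_boot all_order all_algebra.
Set Implicit Arguments. Unset Strict Implicit. Unset Printing Implicit Defensive.
Import Order.TTheory GRing.Theory Num.Theory.
Local Open Scope ring_scope.

Section Defs.
Variables (R : realFieldType) (n : nat).
Local Notation V := 'rV[R]_n.

Definition dot (u v : V) : R := \sum_(k < n) u 0 k * v 0 k.
Definition coroot (a : V) : V := (2 / dot a a) *: a.
Definition refl (a x : V) : V := x - dot a x *: coroot a.

Definition root_system (Phi : seq V) : Prop :=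
  [/\ 0 \notin Phi,
      forall a b, a \in Phi -> b \in Phi -> refl a b \in Phi,
      forall a b, a \in Phi -> b \in Phi ->
        exists z : int, dot b (coroot a) = z%:~R
    & forall a (c : R), a \in Phi -> c *: a \in Phi -> c = 1 \/ c = -1].

Definition int_comb (alpha : 'I_n -> V) (c : 'I_n -> int) : V :=
  \sum_(k < n) (c k)%:~R *: alpha k.

(* alpha_1..alpha_l (l = n = dim V) is a system of simple roots of Phi *)
Definition simple_system (Phi : seq V) (alpha : 'I_n -> V) : Prop :=
  [/\ forall k, alpha k \in Phi,
      forall c : 'I_n -> R, \sum_(k < n) c k *: alpha k = 0 -> forall k, c k = 0
    & forall b, b \in Phi -> exists c : 'I_n -> int,
        b = int_comb alpha c /\ ((forall k, 0 <= c k) \/ (forall k, c k <= 0))].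

Definition irreducible_simple (alpha : 'I_n -> V) : Prop :=
  forall S : {set 'I_n},
    (forall i j, i \in S -> j \notin S -> dot (alpha i) (alpha j) = 0) ->
    S = set0 \/ S = setT.

Definition highest_root (Phi : seq V) (alpha : 'I_n -> V) (amax : V) : Prop :=
  amax \in Phi /\
  forall b, b \in Phi -> exists c : 'I_n -> int,
    (forall k, 0 <= c k) /\ amax - b = int_comb alpha c.

Definition irreducible_root_datum Phi alpha amax : Prop :=
  [/\ root_system Phi, simple_system Phi alpha, irreducible_simple alpha
    & highest_root Phi alpha amax].

(* affine indices 0..l as 'I_n.+1 ; index 0 <-> alpha_0 = -amax *)
Definition aroot (alpha : 'I_n -> V) (amax : V) (j : 'I_n.+1) : V :=
  match unlift ord0 j with Some k => alpha k | None => - amax end.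
Definition adelta (j : 'I_n.+1) : R := (j == ord0)%:R.
Definition aff alpha amax (j : 'I_n.+1) (x : V) : R :=
  dot (aroot alpha amax j) x + adelta j.
Definition sref alpha amax (j : 'I_n.+1) (x : V) : V :=
  x - aff alpha amax j x *: coroot (aroot alpha amax j).
(* the element s_{j1} o ... o s_{jk} of the affine Weyl group for word [:: j1; ..; jk] *)
Definition wordmap alpha amax (ws : seq 'I_n.+1) (x : V) : V :=
  foldr (fun j y => sref alpha amax j y) x ws.

Definition alcove alpha amax (x : V) : Prop :=
  forall j, 0 < aff alpha amax j x.
Definition face alpha amax (I : {set 'I_n.+1}) (x : V) : Prop :=
  forall j, if j \in I then aff alpha amax j x = 0 else 0 < aff alpha amax j x.

Definition Vimg (w : V -> V) (P : V -> Prop) (y : V) : Prop :=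
  exists2 x, P x & y = x - w x.
Definition ran_id_minus (w : V -> V) (y : V) : Prop := exists x, y = x - w x.
Definition tilde (w : V -> V) (x : V) : V := w x - w 0.
Definition regular (w : V -> V) : Prop := bijective (fun x => x - tilde w x).
Definition affine_hyperplane (S : V -> Prop) : Prop :=
  exists a c, a != 0 /\ forall y, S y <-> dot a y = c.

End Defs.

(* Main.v *)
Require Import Defs.
From HB Require Import structures.
From mathcomp Require Import all_boot all_order all_algebra.
Set Implicit Arguments. Unset Strict Implicit. Unset Printing Implicit Defensive.
Import Order.TTheory GRing.Theory Num.Theory.
Local Open Scope ring_scope.


Section Dot.
Variables (R : realFieldType) (n : nat).
Local Notation V := 'rV[R]_n.
Implicit Types u v w : V.

Lemma dotC u v : dot u v = dot v u.
Proof. by apply: eq_bigr => k _; rewrite mulrC. Qed.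
Lemma dotDr u v w : dot u (v + w) = dot u v + dot u w.
Proof. by rewrite /dot -big_split; apply: eq_bigr => k _; rewrite mxE mulrDr. Qed.
Lemma dotZr u v (c : R) : dot u (c *: v) = c * dot u v.
Proof. by rewrite /dot mulr_sumr; apply: eq_bigr => k _; rewrite mxE mulrCA. Qed.
Lemma dotNr u v : dot u (- v) = - dot u v.
Proof. by rewrite -scaleN1r dotZr mulN1r. Qed.
Lemma dotBr u v w : dot u (v - w) = dot u v - dot u w.
Proof. by rewrite dotDr dotNr. Qed.
Lemma dot0r u : dot u 0 = 0.
Proof. by rewrite -(scale0r (0:V)) dotZr mul0r. Qed.
Lemma dotDl u v w : dot (v + w) u = dot v u + dot w u.
Proof. by rewrite dotC dotDr !(dotC u). Qed.
Lemma dotZl u v (c : R) : dot (c *: v) u = c * dot v u.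
Proof. by rewrite dotC dotZr dotC. Qed.
Lemma dotNl u v : dot (- v) u = - dot v u.
Proof. by rewrite dotC dotNr dotC. Qed.
Lemma dotBl u v w : dot (v - w) u = dot v u - dot w u.
Proof. by rewrite dotDl dotNl. Qed.
Lemma dot0l u : dot 0 u = 0.
Proof. by rewrite dotC dot0r. Qed.
Lemma dot_ge0 u : 0 <= dot u u.
Proof. by apply: sumr_ge0 => k _; rewrite -expr2 sqr_ge0. Qed.
Lemma dot_eq0 u : dot u u = 0 -> u = 0.
Proof.
move=> H; apply/rowP => k; rewrite mxE.
have := @psumr_eq0P _ _ xpredT (fun k => u 0 k * u 0 k) _ H k isT.
have H0 : forall i, xpredT i -> 0 <= u 0 i * u 0 i by move=> i _; rewrite -expr2 sqr_ge0.
by move=> /(_ H0) /eqP; rewrite mulf_eq0 orbb => /eqP.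
Qed.
Lemma dot_sumr (I : Type) (r : seq I) (F : I -> V) u :
  dot u (\sum_(i <- r) F i) = \sum_(i <- r) dot u (F i).
Proof.
elim: r => [|x r IH]; first by rewrite !big_nil dot0r.
by rewrite !big_cons dotDr IH.
Qed.
End Dot.

Section Refl.
Variables (R : realFieldType) (n : nat).
Local Notation V := 'rV[R]_n.
Implicit Types a u v w x y : V.

Lemma reflD a x y : refl a (x + y) = refl a x + refl a y.
Proof.
rewrite /refl dotDr scalerDl opprD !addrA; congr (_ - _).
by rewrite -!addrA; congr (_ + _); rewrite addrC.
Qed.
Lemma reflZ a (k : R) x : refl a (k *: x) = k *: refl a x.
Proof. by rewrite /refl dotZr -scalerA scalerBr. Qed.
Lemma refl0 a : refl a 0 = 0.
Proof. by rewrite /refl dot0r scale0r subr0. Qed.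
Lemma reflN a x : refl a (- x) = - refl a x.
Proof. by rewrite -scaleN1r reflZ scaleN1r. Qed.
Lemma reflB a x y : refl a (x - y) = refl a x - refl a y.
Proof. by rewrite reflD reflN. Qed.

Lemma refl_dot a x y : dot (refl a x) (refl a y) = dot x y.
Proof.
have [/dot_eq0 ->|N0] := eqVneq (dot a a) 0.
  by rewrite /refl /coroot !scaler0 !subr0.
rewrite /refl /coroot; set k := 2 / dot a a.
have kN : k * dot a a = 2 by rewrite /k mulfVK.
rewrite !dotBl !dotBr !dotZl !dotZr (dotC x a) kN.
set p := dot a x; set q := dot a y.
set m := q * (k * p).
have -> : p * (k * q) = m by rewrite /m mulrCA mulrA mulrC.
have -> : p * (k * (q * 2)) = m + m.
  rewrite /m -mulr2n -mulr_natr mul1r (mulrA k q 2) (mulrA p) -mulr_natr; f_equal.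
  rewrite mul1r mulr_natr; congr (_ *+ 2); by rewrite !(mulrCA _ k) (mulrC p q).
by rewrite opprB addrK subrK.
Qed.
End Refl.

Section Lin.
Variables (R : realFieldType) (n : nat).
Local Notation V := 'rV[R]_n.
Implicit Types a u v w x y : V.

Lemma lin_mx (f : V -> V) : (forall x y, f (x + y) = f x + f y) ->
  (forall (k : R) x, f (k *: x) = k *: f x) ->
  forall x, f x = x *m (\matrix_(i, j) f (delta_mx 0 i) 0 j).
Proof.
move=> fD fZ x.
have f0 : f 0 = 0 by have := fZ 0 0; rewrite !scale0r.
rewrite mulmx_sum_row {1}(row_sum_delta x) (big_morph f fD f0).
apply: eq_bigr => i _; rewrite fZ; congr (_ *: _).
by apply/rowP => j; rewrite !mxE.
Qed.

Lemma lin_bij (f : V -> V) : (forall x y, f (x + y) = f x + f y) ->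
  (forall (k : R) x, f (k *: x) = k *: f x) ->
  (forall x, f x = 0 -> x = 0) -> bijective f.
Proof.
move=> fD fZ fi.
set M := \matrix_(i, j) f (delta_mx 0 i) 0 j.
have fM := lin_mx fD fZ; rewrite -/M in fM.
have uM : M \in unitmx.
  by rewrite -row_free_unit; apply: inj_row_free => v; rewrite -fM => /fi.
exists (fun y => y *m invmx M) => x; first by rewrite fM mulmxK.
by rewrite fM mulmxKV.
Qed.

Lemma span_indep (alpha : 'I_n -> V) :
  (forall c : 'I_n -> R, \sum_(k < n) c k *: alpha k = 0 -> forall k, c k = 0) ->
  forall v, (forall k, dot (alpha k) v = 0) -> v = 0.
Proof.
move=> ind v hv.
set M := \matrix_(k, j) alpha k 0 j.
have rM : forall k, row k M = alpha k by move=> k; apply/rowP => j; rewrite !mxE.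
have uM : M \in unitmx.
  rewrite -row_free_unit; apply: inj_row_free => x.
  rewrite mulmx_sum_row => H; apply/rowP => k; rewrite mxE.
  apply: (ind (fun k => x 0 k)); rewrite -[RHS]H; apply: eq_bigr => i _.
  by rewrite rM.
have : v *m M^T = 0.
  apply/rowP => k0; rewrite !mxE -[RHS](hv k0) /dot; apply: eq_bigr => j _.
  by rewrite !mxE mulrC.
move=> /(congr1 (mulmx^~ (invmx M^T))); rewrite mulmxK ?unitmx_tr //.
by rewrite mul0mx.
Qed.

Variable L : V -> V.
Hypothesis LB : forall x y, L (x - y) = L x - L y.
Hypothesis Ldot : forall x y, dot (L x) (L y) = dot x y.

Lemma fix_of_dot a : (forall x, dot a (x - L x) = 0) -> L a = a.
Proof.
move=> h; have := h a; rewrite dotBr => /eqP; rewrite subr_eq0 => /eqP h1.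
apply/eqP; rewrite -subr_eq0; apply/eqP/dot_eq0.
rewrite !dotBl !dotBr Ldot (dotC (L a) a) -h1.
by rewrite !subrr.
Qed.

Lemma dot_fix a x : L a = a -> dot a (L x) = dot a x.
Proof. by move=> h; rewrite -{1}h Ldot. Qed.
End Lin.

Section Root.
Variables (R : realFieldType) (n : nat).
Local Notation V := 'rV[R]_n.
Implicit Types a u v w x y : V.
Variables (alpha : 'I_n -> V) (amax : V).
Local Notation ar := (aroot alpha amax).

Lemma aroot_lift k : ar (lift ord0 k) = alpha k.
Proof. by rewrite /aroot liftK. Qed.
Lemma aroot0 : ar ord0 = - amax.
Proof. by rewrite /aroot unlift_none. Qed.

Definition wlin (ws : seq 'I_n.+1) x := foldr (fun j y => refl (ar j) y) x ws.

Lemma wlinB ws x y : wlin ws (x - y) = wlin ws x - wlin ws y.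
Proof. by elim: ws => //= j ws ->; rewrite reflB. Qed.
Lemma wlinD ws x y : wlin ws (x + y) = wlin ws x + wlin ws y.
Proof. by elim: ws => //= j ws ->; rewrite reflD. Qed.
Lemma wlinZ ws (k : R) x : wlin ws (k *: x) = k *: wlin ws x.
Proof. by elim: ws => //= j ws ->; rewrite reflZ. Qed.
Lemma wlin_dot ws x y : dot (wlin ws x) (wlin ws y) = dot x y.
Proof. by elim: ws => //= j ws <-; rewrite refl_dot. Qed.

Lemma srefE j x : sref alpha amax j x = refl (ar j) x + sref alpha amax j 0.
Proof.
rewrite /sref /refl /aff dot0r !add0r scalerDl opprD addrA.
by [].
Qed.

Lemma wordmapE ws x : wordmap alpha amax ws x = wlin ws x + wordmap alpha amax ws 0.
Proof.
elim: ws => [|j ws IH] /=; first by rewrite /wordmap /= addr0.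
rewrite /wordmap /= -/(wordmap alpha amax ws x) -/(wordmap alpha amax ws 0).
rewrite IH srefE reflD -addrA; congr (_ + _).
by rewrite [in RHS]srefE.
Qed.
End Root.

Section Datum.
Variables (R : realFieldType) (n : nat).
Local Notation V := 'rV[R]_n.
Implicit Types a u v w x y : V.
Variables (Phi : seq V) (alpha : 'I_n -> V) (amax : V).
Local Notation ar := (aroot alpha amax).
Hypothesis hs : simple_system Phi alpha.
Hypothesis hh : highest_root Phi alpha amax.

Lemma amax_pos : exists c : 'I_n -> R,
  amax = \sum_k c k *: alpha k /\ forall k, 0 < c k.
Proof.
case: hs => hin hind hcomb; case: hh => hmax hhi.
have [c [Ec _]] := hcomb _ hmax.
exists (fun k => (c k)%:~R); split => // k.
have [d [dpos Ed]] := hhi _ (hin k).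
have Ek : alpha k = \sum_j (j == k)%:R *: alpha j.
  rewrite (bigD1 k) //= eqxx scale1r big1 ?addr0 // => j /negbTE ->.
  by rewrite scale0r.
have := hind (fun j => (c j)%:~R - (j == k)%:R - (d j)%:~R).
have -> : \sum_j ((c j)%:~R - (j == k)%:R - (d j)%:~R) *: alpha j = 0.
  transitivity (amax - alpha k - int_comb alpha d); last by rewrite Ed subrr.
  rewrite Ec {1}Ek /int_comb -!sumrB.
  by apply: eq_bigr => j _; rewrite !scalerBl.
move=> /(_ erefl k) /eqP; rewrite eqxx subr_eq0 subr_eq => /eqP ->.
by rewrite ltr_wpDl ?ler0z // ltr01.
Qed.

Lemma dot_suml (F : 'I_n -> V) v : dot (\sum_k F k) v = \sum_k dot (F k) v.
Proof. by rewrite dotC dot_sumr; apply: eq_bigr => k _; rewrite dotC. Qed.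

Lemma exists_neg a : a != 0 -> exists j, dot (ar j) a < 0.
Proof.
move=> a0.
case: (boolP [exists j, dot (ar j) a < 0]) => [/existsP // |].
rewrite negb_exists => /forallP H.
have H' j : 0 <= dot (ar j) a by rewrite leNgt H.
have [c [Ec cpos]] := amax_pos.
have E0 : dot (ar ord0) a = - \sum_k c k * dot (alpha k) a.
  by rewrite aroot0 dotNl Ec dot_suml; congr (- _); apply: eq_bigr => k _; rewrite dotZl.
have Sge : forall k, true -> 0 <= c k * dot (alpha k) a.
  by move=> k _; rewrite mulr_ge0 ?(ltW (cpos k)) // -(aroot_lift alpha amax) H'.
have S0 : \sum_k c k * dot (alpha k) a = 0.
  apply/eqP; rewrite eq_le sumr_ge0 ?andbT //.
  by rewrite -oppr_ge0 -E0 H'.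
case/negP: a0; apply/eqP.
case: hs => _ hind _; apply: (span_indep hind) => k.
have := psumr_eq0P Sge S0 (i := k) isT; move/eqP; rewrite mulf_eq0.
by rewrite (gt_eqF (cpos k)) => /eqP.
Qed.
End Datum.

Section Endpoint.
Variables (R : realFieldType) (n : nat).
Local Notation V := 'rV[R]_n.
Implicit Types u v w x y : V.
Variables (alpha : 'I_n -> V) (amax : V).
Local Notation ar := (aroot alpha amax).
Local Notation af := (aff alpha amax).

Lemma aff_shift j x t a : af j (x + t *: a) = af j x + t * dot (ar j) a.
Proof. by rewrite /aff dotDr dotZr addrAC. Qed.

Variables (sigma : V -> V) (a x0 : V).
Hypothesis hsh : forall x t, sigma (x + t *: a) = sigma x + t *: a.
Hypothesis hA : alcove alpha amax x0.
Hypothesis hface : forall I : {set 'I_n.+1}, I != setT -> (2 <= #|I|)%N ->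
  ~ Vimg sigma (face alpha amax I) (x0 - sigma x0).
Variables (j1 j2 : 'I_n.+1).
Hypothesis hj1 : dot (ar j1) a < 0.
Hypothesis hj2 : 0 < dot (ar j2) a.

Lemma endpoint : exists i, dot (ar i) a < 0 /\
  Vimg sigma (face alpha amax [set i]) (x0 - sigma x0).
Proof.
pose d j := dot (ar j) a.
pose F j := af j x0 / (- d j).
have [i0 di Fmin] := @arg_minP _ _ _ j1 (fun j => d j < 0) F hj1.

pose t := F i0.
have tpos : 0 < t by rewrite /t /F divr_gt0 ?oppr_gt0 // hA.
pose p := x0 + t *: a.
have afp j : af j p = af j x0 + t * d j by rewrite aff_shift.
have afi : af i0 p = 0.
  by rewrite afp /t /F invrN mulrN mulNr -mulrA mulVf ?mulr1 ?subrr // ltr0_neq0.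
have afge j : 0 <= af j p.
  rewrite afp; case: (ltP (d j) 0) => dj.
    have := Fmin j dj; rewrite /F -/t ler_pdivlMr ?oppr_gt0 //.
    by rewrite mulrN -subr_ge0 opprK.
  by rewrite addr_ge0 ?(ltW (hA j)) // mulr_ge0 // ltW.
pose I1 := [set j | af j p == 0].
have fI1 : face alpha amax I1 p.
  move=> j; rewrite inE; case: eqP => // /eqP ne.
  by rewrite lt_def ne afge.
have I1T : I1 != setT.
  apply/negP => /eqP E; have : j2 \in I1 by rewrite E inE.
  rewrite inE afp gt_eqF // ltr_wpDr ?(hA j2) //.
  by rewrite ltW // mulr_gt0.
have VI : Vimg sigma (face alpha amax I1) (x0 - sigma x0).
  by exists p => //; rewrite /p hsh opprD addrACA subrr addr0.
have c1 : (#|I1| <= 1)%N by rewrite leqNgt; apply/negP => /(hface I1T); apply.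
have iI : i0 \in I1 by rewrite inE afi.
have E : [set i0] = I1.
  by apply/eqP; rewrite eqEcard sub1set iI cards1.
by exists i0; split => //; rewrite E.
Qed.
End Endpoint.

Section Main.
Variables (R : realFieldType) (n : nat).
Local Notation V := 'rV[R]_n.
Implicit Types u v w x y : V.
Variables (alpha : 'I_n -> V) (amax : V) (ws : seq 'I_n.+1).
Local Notation ar := (aroot alpha amax).
Local Notation af := (aff alpha amax).
Local Notation sig := (wordmap alpha amax ws).
Local Notation L := (wlin alpha amax ws).
Local Notation s := (sref alpha amax).
Variables (a : V) (c : R).
Hypothesis a0 : a != 0.
Hypothesis Ha : forall y, ran_id_minus sig y <-> dot a y = c.

Lemma hc x : dot a (x - sig x) = c.
Proof. by apply/Ha; exists x. Qed.

Lemma sigE x : sig x = L x + sig 0.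
Proof. exact: wordmapE. Qed.

Lemma fixA : L a = a.
Proof.
apply: fix_of_dot; [exact: wlin_dot|] => x.
have := hc x; have := hc 0; rewrite sigE [sig x]sigE.
have L0 : L 0 = 0 by have := @wlinB R n alpha amax ws 0 0; rewrite !subrr.
rewrite sub0r !dotBr dotNr => <- /eqP.
by rewrite L0 add0r dotDr opprD addrA subr_eq addNr => /eqP.
Qed.

Lemma hsh x t : sig (x + t *: a) = sig x + t *: a.
Proof. by rewrite sigE wlinD wlinZ fixA [sig x]sigE addrAC. Qed.

Lemma dotL x : dot a (L x) = dot a x.
Proof. apply: dot_fix; [exact: wlin_dot | exact: fixA]. Qed.

Lemma dot_w j x : dot a (x - sig (s j x)) = c + af j x * dot a (coroot (ar j)).
Proof.
rewrite sigE dotBr dotDr dotL.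
have := hc 0; rewrite sub0r dotNr => <-.
rewrite /sref /aff dotBr dotZr.
set P := dot a x; set Q := (_ * _); set Z := dot a (sig 0).
by rewrite opprD opprB addrA (addrC P) subrK addrC.
Qed.

Lemma dot_coroot r : dot r a != 0 -> dot a (coroot r) = (2 / dot r r) * dot r a.
Proof. by move=> _; rewrite /coroot dotZr dotC. Qed.

Lemma coef_pos r : dot r a != 0 -> 0 < 2 / dot r r.
Proof.
move=> ra; rewrite divr_gt0 ?ltr0n // lt_def dot_ge0 andbT.
apply/eqP => /dot_eq0 r0; by move: ra; rewrite r0 dot0l eqxx.
Qed.

Lemma ranL y : dot a y = 0 -> exists x, y = x - L x.
Proof.
move=> ay.
have : ran_id_minus sig (y - sig 0).
  by apply/Ha; rewrite dotBr ay -(hc 0) !sub0r dotNr.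
case=> x; rewrite [sig x]sigE => /eqP; rewrite subr_eq opprD addrA subrK => /eqP ->.
by exists x.
Qed.

Lemma reg j : dot (ar j) a != 0 -> regular (fun x => sig (s j x)).
Proof.
move=> ra; rewrite /regular /tilde.
have E x : sig (s j x) - sig (s j 0) = L (refl (ar j) x).
  by rewrite sigE [sig (s j 0)]sigE opprD addrACA subrr addr0 -wlinB [s j x]srefE addrK.
suff: bijective (fun x => x - L (refl (ar j) x)) by move=> B; apply: (eq_bij B) => x /=; rewrite E.
apply: lin_bij.
- by move=> x y; rewrite reflD wlinD opprD addrACA.
- by move=> k x; rewrite reflZ wlinZ scalerBr.
move=> v /eqP; rewrite subr_eq0 => /eqP Ev.
have rv : dot (ar j) v = 0.
  have := dotL (refl (ar j) v); rewrite -Ev /refl dotBr dotZr => /eqP.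
  rewrite -subr_eq0 opprB addrC subrK => /eqP.
  rewrite dot_coroot // => /eqP; rewrite mulf_eq0 mulf_eq0 (negbTE ra) orbF.
  by rewrite (gt_eqF (coef_pos ra)) orbF => /eqP.
have Lv : L v = v by rewrite {2}Ev /refl rv scale0r subr0.
pose k := dot a v / dot a a.
pose y := v - k *: a.
have aa : dot a a != 0 by apply/eqP => /dot_eq0 /eqP; rewrite (negbTE a0).
have ay : dot a y = 0 by rewrite dotBr dotZr /k mulfVK // subrr.
have vy : dot v y = 0.
  have [x ->] := ranL ay.
  by rewrite dotBr -{2}Lv wlin_dot subrr.
have y0 : y = 0.
  by apply: dot_eq0; rewrite {1}/y dotBl dotZl vy ay mulr0 subrr.
have va : v = k *: a by apply/eqP; rewrite -subr_eq0 -/y y0.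
move: rv; rewrite va dotZr => /eqP; rewrite mulf_eq0 (negbTE ra) orbF => /eqP k0.
by rewrite k0 scale0r.
Qed.

Lemma face_fix j x : face alpha amax [set j] x -> s j x = x.
Proof.
move=> /(_ j); rewrite set11 => h.
by rewrite /sref h scale0r subr0.
Qed.
End Main.

Unset Implicit Arguments.
Set Strict Implicit.

Theorem proposition3p3 (R : realFieldType) (n : nat) (Phi : seq 'rV[R]_n)
    (alpha : 'I_n -> 'rV[R]_n) (amax : 'rV[R]_n) (ws : seq 'I_n.+1)
    (xi : 'rV[R]_n) :
  irreducible_root_datum Phi alpha amax ->
  let sigma := wordmap alpha amax ws in
  let s := sref alpha amax in
  let A := alcove alpha amax in
  let A_ := face alpha amax in
  affine_hyperplane (ran_id_minus sigma) ->
  Vimg sigma A xi ->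
  (forall I : {set 'I_n.+1}, I != setT -> (2 <= #|I|)%N -> ~ Vimg sigma (A_ I) xi) ->
  exists i i' : 'I_n.+1,
    [/\ i != i', Vimg sigma (A_ [set i]) xi, Vimg sigma (A_ [set i']) xi
      & let w := fun x => sigma (s i x) in
        let w' := fun x => sigma (s i' x) in
        [/\ regular w, regular w',
            forall y, Vimg w (A_ [set i]) y <-> Vimg sigma (A_ [set i]) y,
            forall y, Vimg w' (A_ [set i']) y <-> Vimg sigma (A_ [set i']) y
          & exists a c, [/\ a != 0,
              forall y, ran_id_minus sigma y <-> dot a y = c,
              forall y, Vimg w A y -> c < dot a y
              & forall y, Vimg w' A y -> dot a y < c]]].
Proof.
move=> [_ hs _ hh] sigma s A A_ [a [c [a0 Ha]]] [x0 hx0 ->] Hface.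
have [j1 hj1] := exists_neg hs hh a0.
have [j2 hj2] : exists j, 0 < dot (aroot alpha amax j) a.
  have na0 : - a != 0 by rewrite oppr_eq0.
  have [j] := exists_neg hs hh na0.
  by rewrite dotNr oppr_lt0 => h; exists j.
have hsh1 := hsh Ha.
have hsh2 : forall x t, sigma (x + t *: - a) = sigma x + t *: - a.
  by move=> x t; rewrite /sigma scalerN -scaleNr hsh1 scaleNr.
have [iN [dN VN]] := endpoint hsh1 hx0 Hface hj1 hj2.
have hj2' : dot (aroot alpha amax j2) (- a) < 0 by rewrite dotNr oppr_lt0.
have hj1' : 0 < dot (aroot alpha amax j1) (- a) by rewrite dotNr oppr_gt0.
have [iP [dP VP]] := endpoint hsh2 hx0 Hface hj2' hj1'.
rewrite dotNr oppr_lt0 in dP.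
exists iP, iN; split => //.
  by apply/eqP => E; move: dP; rewrite E => h; move: (lt_trans dN h); rewrite ltxx.
split.
- by apply: (reg a0 Ha); rewrite gt_eqF.
- by apply: (reg a0 Ha); rewrite lt_eqF.
- by move=> y; split; case=> x hx ->; exists x => //; rewrite /s face_fix.
- by move=> y; split; case=> x hx ->; exists x => //; rewrite /s face_fix.
exists a, c; split => // y [x hx ->]; rewrite /sigma /s.
  have kp : 0 < 2 / dot (aroot alpha amax iP) (aroot alpha amax iP).
    by apply: (coef_pos (a:=a)); rewrite gt_eqF.
  rewrite (dot_w Ha) dot_coroot ?gt_eqF // ltrDl.
  by rewrite mulr_gt0 ?hx // mulr_gt0.
have kp : 0 < 2 / dot (aroot alpha amax iN) (aroot alpha amax iN).
  by apply: (coef_pos (a:=a)); rewrite lt_eqF.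
rewrite (dot_w Ha) dot_coroot ?lt_eqF // gtrDl.
by rewrite pmulr_rlt0 ?hx // pmulr_rlt0.
Qed.
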